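(* Let $\{G_n\}_{n\ge1}$ be a sequence of graphs with $|V(G_n)|\to\infty$ and $N(H,G_n)>0$ for all $n$, let $H$ be a fixed connected graph, and let $p_n\in(0,1)$ satisfy $\limsup_{n\to\infty}p_n<1$. Then the Horvitz–Thompson estimator $\hat N(H,G_n)$ is consistent for $N(H,G_n)$, i.e. $\hat N(H,G_n)/N(H,G_n)\to1$ in probability, if and only if for every $\varepsilon>0$, $$\lim_{n\to\infty}\frac{1}{N(H,G_n)}\sum_{\substack{A\subset V(G_n)\\ 1\le|A|\le|V(H)|}} t_H(A)\,\mathbf 1\{t_H(A)>\varepsilon\, p_n^{|A|}N(H,G_n)\}=0.$$
   Context: $G_n$ is a simple, labeled, undirected graph with vertex set $V(G_n)=\{1,\dots,|V(G_n)|\}$ and adjacency matrix $(a_{ij})$. $H=(V(H),E(H))$ is a fixed connected graph with $V(H)=\{1,\dots,|V(H)|\}$, and $|Aut(H)|$ is the number of its automorphisms. For $k\ge1$, $V(G_n)_k$ denotes the set of $k$-tuples $\mathbf s=(s_1,\dots,s_k)$ of distinct vertices of $G_n$, and $\bar{\mathbf s}$ the set of entries of $\mathbf s$. For $\mathbf s\in V(G_n)_{|V(H)|}$ let $M_H(\mathbf s)=\prod_{(i,j)\in E(H)}a_{s_is_j}$, and $N(H,G_n)=\frac1{|Aut(H)|}\sum_{\mathbf s\in V(G_n)_{|V(H)|}}M_H(\mathbf s)$ (the number of copies of $H$ in $G_n$). Subgraph sampling: $\{X_v\}_{v\in V(G_n)}$ are i.i.d. Bernoulli$(p_n)$, $X_{\mathbf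 s}=\prod_{u=1}^{|V(H)|}X_{s_u}$, $T(H,G_n)=\frac1{|Aut(H)|}\sum_{\mathbf s\in V(G_n)_{|V(H)|}}M_H(\mathbf s)X_{\mathbf s}$, and $\hat N(H,G_n)=p_n^{-|V(H)|}T(H,G_n)$. For $A\subset V(G_n)$ with $|A|\le|V(H)|$, the local count is $t_H(A)=\frac1{|Aut(H)|}\sum_{\mathbf s\in V(G_n)_{|V(H)|}:\,\bar{\mathbf s}\supseteq A}M_H(\mathbf s)$. *)

(* Defs.v *)
From HB Require Import structures.
From mathcomp Require Import all_boot all_order all_algebra all_fingroup.
From mathcomp Require Import all_classical all_reals all_analysis.
Set Implicit Arguments. Unset Strict Implicit. Unset Printing Implicit Defensive.
Import Order.TTheory GRing.Theory Num.Theory.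
Local Open Scope ring_scope.

(* A simple labelled graph on vertex set 'I_m (vertices 1..m shifted to 0..m-1)
   is a symmetric irreflexive boolean relation. *)
Definition simple_graph (m : nat) (e : rel 'I_m) : Prop :=
  symmetric e /\ irreflexive e.

Definition connected_graph (k : nat) (e : rel 'I_k) : Prop :=
  forall x y : 'I_k, connect e x y.

Section Defs.
Variable R : realType.

Definition adj (m : nat) (G : rel 'I_m) (i j : 'I_m) : R := (G i j)%:R.

Definition nAut (k : nat) (EH : rel 'I_k) : nat :=
  #|[set s : {perm 'I_k} | [forall i, forall j, EH (s i) (s j) == EH i j]]|.

(* M_H(s) = prod_{(i,j) in E(H)} a_{s_i s_j}; each (unordered) edge once, i < j *)
Definition MH (k m : nat) (EH : rel 'I_k) (G : rel 'I_m) (s : {ffun 'I_k -> 'I_m}) : R :=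
  \prod_(i : 'I_k) \prod_(j : 'I_k | (i < j)%N && EH i j) adj G (s i) (s j).

(* N(H,G): tuples of distinct vertices = injective maps 'I_k -> 'I_m *)
Definition NHG (k m : nat) (EH : rel 'I_k) (G : rel 'I_m) : R :=
  (nAut EH)%:R^-1 * \sum_(s : {ffun 'I_k -> 'I_m} | injectiveb s) MH EH G s.

(* T(H,G) for a sample X : {ffun 'I_m -> bool} (X_v = 1 iff v sampled) *)
Definition THG (k m : nat) (EH : rel 'I_k) (G : rel 'I_m) (X : {ffun 'I_m -> bool}) : R :=
  (nAut EH)%:R^-1 * \sum_(s : {ffun 'I_k -> 'I_m} | injectiveb s)
     MH EH G s * \prod_(u : 'I_k) (X (s u))%:R.

Definition hatN (k m : nat) (EH : rel 'I_k) (G : rel 'I_m) (p : R) (X : {ffun 'I_m -> bool}) : R :=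
  (p ^+ k)^-1 * THG EH G X.

Definition Pr_sample (m : nat) (p : R) (E : pred {ffun 'I_m -> bool}) : R :=
  \sum_(X : {ffun 'I_m -> bool} | E X) \prod_(v : 'I_m) (if X v then p else 1 - p).

Definition tH (k m : nat) (EH : rel 'I_k) (G : rel 'I_m) (A : {set 'I_m}) : R :=
  (nAut EH)%:R^-1 * \sum_(s : {ffun 'I_k -> 'I_m} | injectiveb s && (A \subset [set s i | i : 'I_k]))
     MH EH G s.

End Defs.

(* Main.v *)
Require Import Defs.
From HB Require Import structures.
From mathcomp Require Import all_boot all_order all_algebra all_fingroup.
From mathcomp Require Import all_classical all_reals all_analysis.
From mathcomp Require Import ring lra.
Import Order.TTheory GRing.Theory Num.Theory.

Set Implicit Arguments. Unset Strict Implicit. Unset Printing Implicit Defensive.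
Local Open Scope ring_scope.

Section Basic.
Variable R : realType.
Variable m : nat.
Local Notation V := 'I_m.
Local Notation smp := {ffun V -> bool}.

Definition mu (p : R) (X : smp) : R := \prod_v (if X v then p else 1 - p).
Definition subs (A : {set V}) (X : smp) : bool := [forall v in A, X v].
Definition Ex (p : R) (f : smp -> R) : R := \sum_X mu p X * f X.
Definition Prb (p : R) (Q : pred smp) : R := \sum_(X | Q X) mu p X.

Lemma sum_prod_ffun (g : V -> bool -> R) :
  \sum_(X : smp) \prod_v g v (X v) = \prod_v (g v true + g v false).
Proof.
rewrite -(bigA_distr_bigA (fun v b => g v b)) /=.
by apply: eq_bigr => v _; rewrite big_bool.
Qed.

Lemma ind_prod (A : {set V}) (X : smp) :
  ((subs A X)%:R : R) = \prod_v (if v \in A then ((X v)%:R : R) else 1).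
Proof.
rewrite -big_mkcond /subs.
case: forallP => [H|H].
  rewrite big1 // => v vA; by move/implyP: (H v) => /(_ vA) ->.
have [v] : exists v, ~~ ((v \in A) ==> X v).
  by apply/existsP; rewrite -negb_forall; apply/negP => /forallP.
rewrite negb_imply => /andP[vA /negbTE Xv].
by rewrite (bigD1 v) //= Xv mul0r.
Qed.

Lemma Ex_ind p (A : {set V}) : Ex p (fun X => (subs A X)%:R) = p ^+ #|A|.
Proof.
rewrite /Ex.
under eq_bigr => X _ do rewrite ind_prod /mu -big_split /=.
rewrite (sum_prod_ffun (fun v b => (if b then p else 1 - p) *
   (if v \in A then (b%:R : R) else 1))) /=.
rewrite -(prodr_const (mem A)) [RHS]big_mkcond /=; apply: eq_bigr => v _.
by case: (v \in A); rewrite /= ?mulr1 ?mulr0 ?addr0 //; rewrite addrC subrK.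
Qed.

Lemma Ex1 p : Ex p (fun _ => 1) = 1.
Proof.
transitivity (Ex p (fun X => (subs (finset.set0 : {set V}) X)%:R)); last first.
  by rewrite Ex_ind cards0 expr0.
rewrite /Ex; apply: eq_bigr => X _; congr (_ * _).
have -> : subs finset.set0 X = true by apply/forallP => v; rewrite inE.
by [].
Qed.

Lemma Ex_sum p (I : finType) (P : pred I) (F : I -> smp -> R) :
  Ex p (fun X => \sum_(i | P i) F i X) = \sum_(i | P i) Ex p (F i).
Proof.
rewrite /Ex; under eq_bigr => X _ do rewrite mulr_sumr.
by rewrite exchange_big.
Qed.

Lemma Ex_scale p c f : Ex p (fun X => c * f X) = c * Ex p f.
Proof. by rewrite /Ex mulr_sumr; apply: eq_bigr => X _; rewrite mulrCA. Qed.

Lemma Ex_add p f g : Ex p (fun X => f X + g X) = Ex p f + Ex p g.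
Proof. by rewrite /Ex -big_split; apply: eq_bigr => X _; rewrite mulrDr. Qed.

Lemma Ex_opp p f : Ex p (fun X => - f X) = - Ex p f.
Proof. by rewrite /Ex -sumrN; apply: eq_bigr => X _; rewrite mulrN. Qed.

Lemma mu_ge0 p X : 0 <= p <= 1 -> 0 <= mu p X.
Proof.
case/andP=> p0 p1; apply: prodr_ge0 => v _; case: (X v) => //.
by rewrite subr_ge0.
Qed.

Lemma Ex_le p f g : 0 <= p <= 1 -> (forall X, f X <= g X) -> Ex p f <= Ex p g.
Proof.
move=> hp H; apply: ler_sum => X _; apply: ler_wpM2l; [exact: mu_ge0|exact: H].
Qed.

Lemma Prb_Ex p Q : Prb p Q = Ex p (fun X => (Q X)%:R).
Proof.
by rewrite /Prb /Ex big_mkcond; apply: eq_bigr => X _; case: (Q X); rewrite ?mulr1 ?mulr0.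
Qed.

Lemma subsU A B X : subs A X && subs B X = subs (A :|: B) X.
Proof.
rewrite /subs; apply/andP/forallP => [[/forallP HA /forallP HB] v|H].
  by rewrite finset.in_setU; apply/implyP => /orP[vA|vB]; [move/implyP: (HA v)|move/implyP: (HB v)]; apply.
split; apply/forallP => v; apply/implyP => vv; move/implyP: (H v); apply; rewrite finset.in_setU vv ?orbT //.
Qed.

End Basic.

Local Open Scope ring_scope.

Lemma eq_ler (R : numDomainType) (x y : R) : x = y -> x <= y.
Proof. by move=> ->. Qed.

Lemma sum_le_subpred (R : realType) (T : finType) (P1 P2 : pred T) (F : T -> R) :
  (forall x, P1 x -> P2 x) -> (forall x, P2 x -> 0 <= F x) ->
  \sum_(x | P1 x) F x <= \sum_(x | P2 x) F x.
Proof.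
move=> H H0; rewrite [X in _ <= X](bigID P1) /= -[X in X <= _]addr0 lerD //.
  by apply/eq_ler/eq_bigl => x; case h: (P1 x); rewrite ?andbT ?andbF ?(H _ h).
by apply: sumr_ge0 => x /andP[] /H0.
Qed.

Section Harris.
Variable R : realType.
Variable m : nat.
Local Notation V := 'I_m.
Local Notation smp := {ffun V -> bool}.
Variable p : R.
Hypothesis p01 : 0 < p < 1.

Definition monoP (Q : pred smp) :=
  forall X Y : smp, (forall v, X v -> Y v) -> Q X -> Q Y.

Definition flip (u : V) (X : smp) : smp := [ffun v => if v == u then ~~ X v else X v].

Lemma flipK u : involutive (flip u).
Proof. move=> X; apply/ffunP => v; rewrite !ffunE; case: eqP => // _; exact: negbK. Qed.

Lemma mu_flip u (X : smp) : X u -> p * mu p (flip u X) = (1 - p) * mu p X.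
Proof.
move=> Xu; rewrite /mu (bigD1 u) //= [in RHS](bigD1 u) //= ffunE eqxx Xu /=.
rewrite mulrCA; congr (_ * (_ * _)).
by apply: eq_bigr => v /negbTE vu; rewrite ffunE vu.
Qed.

Lemma p01' : 0 <= p <= 1.
Proof. by case/andP: p01 => /ltW -> /ltW ->. Qed.

Lemma harris1 Q u : monoP Q -> p * Prb p Q <= Prb p (fun X => Q X && X u).
Proof.
move=> mQ; rewrite /Prb (bigID (fun X : smp => X u)) /= mulrDr.
set S1 := \sum_(X | Q X && X u) mu p X.
have h2 : p * \sum_(X | Q X && ~~ X u) mu p X <= (1 - p) * S1.
  rewrite (reindex_inj (inv_inj (flipK u))) /= mulr_sumr /S1 mulr_sumr.
  have e : forall Y : smp, flip u Y u = ~~ Y u by move=> Y; rewrite ffunE eqxx.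
  under eq_bigl => Y do rewrite e negbK.
  under eq_bigr => Y /andP[_ Yu] do rewrite (mu_flip Yu).
  apply: sum_le_subpred => [Y /andP[QY Yu]|Y _]; last first.
    by apply: mulr_ge0; [rewrite subr_ge0; case/andP: p01' | exact: mu_ge0 p01'].
  rewrite Yu andbT; apply: mQ QY => v; rewrite ffunE; case: eqP => [->|//].
  by rewrite Yu.
have : p * S1 + p * \sum_(X | Q X && ~~ X u) mu p X <= p * S1 + (1 - p) * S1.
  by rewrite lerD2l.
move/le_trans; apply.
by rewrite -mulrDl addrC subrK mul1r.
Qed.

Lemma harris Q (A : {set V}) : monoP Q ->
  p ^+ #|A| * Prb p Q <= Prb p (fun X => Q X && subs A X).
Proof.
move Hn: #|A| => n; elim: n Q A Hn => [|n IH] Q A hA mQ.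
  move/eqP: hA; rewrite cards_eq0 => /eqP ->; rewrite expr0 mul1r.
  apply/eq_ler/eq_bigl => X; rewrite /subs.
  have -> : [forall v in finset.set0, X v] = true by apply/forallP => v; rewrite inE.
  by rewrite andbT.
have [u uA] : exists u, u \in A.
  by apply/set0Pn; rewrite -card_gt0 hA.
have hA' : #|A :\ u| = n by move: hA; rewrite (cardsD1 u) uA add1n => -[].
have mQ' : monoP (fun X => Q X && subs (A :\ u) X).
  move=> X Y XY /andP[QX sX]; rewrite (mQ _ _ XY QX) /=.
  apply/forallP => v; apply/implyP => vA; apply: XY.
  by move/forallP: sX => /(_ v) /implyP; apply.
have := IH _ _ hA' mQ; move/(ler_wpM2l (ltW (proj1 (andP p01)))) => h1.
have h2 := harris1 u mQ'.
rewrite exprS -mulrA; apply: (le_trans h1); apply: (le_trans h2).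
apply/eq_ler/eq_bigl => X; rewrite -andbA; congr (_ && _).
have -> : subs A X = subs (u |: A :\ u) X by rewrite finset.setD1K.
rewrite -subsU andbC; congr (_ && _).
rewrite /subs; apply/idP/forallP => [Xu v|]; last by move/(_ u); rewrite inE eqxx.
by rewrite inE; apply/implyP => /eqP ->.
Qed.

End Harris.

Local Open Scope ring_scope.

Section Abstract.
Variable R : realType.
Variable m : nat.
Local Notation V := 'I_m.
Local Notation smp := {ffun V -> bool}.
Variable I : finType.
Variable w : I -> R.
Variable S : I -> {set V}.
Variable p : R.
Variable k : nat.
Hypothesis w_ge0 : forall i, 0 <= w i.
Hypothesis p01 : 0 < p < 1.
Hypothesis Sk : forall i, (#|S i| <= k)%N.

Definition Ntot := \sum_i w i.
Definition tA (A : {set V}) := \sum_(i | A \subset S i) w i.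
Definition Zf (X : smp) : R :=
  Ntot^-1 * \sum_i w i * (p ^+ #|S i|)^-1 * (subs (S i) X)%:R.
Definition Bad (eps : R) : R :=
  \sum_(A : {set V} | (1 <= #|A| <= k)%N) tA A * ((eps * p ^+ #|A| * Ntot < tA A)%R)%:R.

Hypothesis N_gt0 : 0 < Ntot.

Lemma p0 : 0 < p. Proof. by case/andP: p01. Qed.
Lemma p1 : p < 1. Proof. by case/andP: p01. Qed.
Lemma pp01 : 0 <= p <= 1. Proof. by rewrite (ltW p0) (ltW p1). Qed.
Lemma pX_gt0 n : 0 < p ^+ n. Proof. exact: exprn_gt0 p0. Qed.
Lemma pX_neq0 n : p ^+ n != 0. Proof. by rewrite gt_eqF // pX_gt0. Qed.
Lemma Ninv_ge0 : 0 <= Ntot^-1. Proof. by rewrite invr_ge0 ltW. Qed.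

Lemma Ex_ext (f g : smp -> R) : (forall X, f X = g X) -> Ex p f = Ex p g.
Proof. by move=> H; apply: eq_bigr => X _; rewrite H. Qed.

Lemma Ex_const c : Ex p (fun _ : smp => c) = c.
Proof. by rewrite -[RHS]mulr1 -(Ex1 m p) -Ex_scale; apply: Ex_ext => X; rewrite mulr1. Qed.

Lemma Ex_lin (P : pred I) (c : I -> R) :
  Ex p (fun X => \sum_(i | P i) c i * (subs (S i) X)%:R) = \sum_(i | P i) c i * p ^+ #|S i|.
Proof. by rewrite Ex_sum; apply: eq_bigr => i _; rewrite Ex_scale Ex_ind. Qed.

Lemma Ex_Zpart (P : pred I) :
  Ex p (fun X => Ntot^-1 * \sum_(i | P i) w i * (p ^+ #|S i|)^-1 * (subs (S i) X)%:R)
  = Ntot^-1 * \sum_(i | P i) w i.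
Proof.
rewrite Ex_scale Ex_lin; congr (_ * _); apply: eq_bigr => i _.
by rewrite mulfVK // pX_neq0.
Qed.

Lemma EZ : Ex p Zf = 1.
Proof.
have := Ex_Zpart predT; rewrite /Zf => ->.
by rewrite mulVf // gt_eqF.
Qed.

Lemma Z_ge0 X : 0 <= Zf X.
Proof.
apply: mulr_ge0; first exact: Ninv_ge0.
apply: sumr_ge0 => i _; apply: mulr_ge0; last exact: ler0n.
by apply: mulr_ge0 => //; rewrite invr_ge0 ltW // pX_gt0.
Qed.

Lemma tA_ge0 A : 0 <= tA A.
Proof. exact: sumr_ge0. Qed.

Lemma ind_mul A B (X : smp) :
  ((subs A X)%:R : R) * (subs B X)%:R = (subs (A :|: B) X)%:R.
Proof. by rewrite -natrM mulnb subsU. Qed.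

End Abstract.

Local Open Scope ring_scope.

Section Suff.
Variable R : realType.
Variable m : nat.
Local Notation V := 'I_m.
Local Notation smp := {ffun V -> bool}.
Variable I : finType.
Variable w : I -> R.
Variable S : I -> {set V}.
Variable p : R.
Variable k : nat.
Hypothesis w_ge0 : forall i, 0 <= w i.
Hypothesis p01 : 0 < p < 1.
Hypothesis Sk : forall i, (#|S i| <= k)%N.
Local Notation N := (Ntot w).
Local Notation t := (tA w S).
Local Notation Z := (Zf w S p).
Hypothesis N_gt0 : 0 < N.

Lemma pinv_ge1 n : 1 <= (p ^+ n)^-1.
Proof.
rewrite invf_ge1 ?pX_gt0 //; exact: exprn_ile1 (ltW (p0 p01)) (ltW (p1 p01)).
Qed.

Lemma pinv_sub (C : {set V}) :
  (p ^+ #|C|)^-1 - 1 <= \sum_(A : {set V} | (A != finset.set0) && (A \subset C)) (p ^+ #|A|)^-1.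
Proof.
have [->|nC] := eqVneq C finset.set0.
  rewrite cards0 expr0 invr1 subrr; apply: sumr_ge0 => A _; rewrite invr_ge0 ltW // pX_gt0 //.
rewrite (bigD1 C) /= ?nC ?subxx //.
rewrite lerD //; apply: (@le_trans _ _ 0); first by rewrite oppr_le0 ler01.
apply: sumr_ge0 => A _; rewrite invr_ge0 ltW // pX_gt0 //.
Qed.

Section Good.
Variable eta : R.
Hypothesis eta_ge0 : 0 <= eta.
Definition good (i : I) : bool :=
  [forall A : {set V}, ((A != finset.set0) && (A \subset S i)) ==> (t A <= eta * p ^+ #|A| * N)].

Lemma key_good i : good i ->
  \sum_j w j * ((p ^+ #|S i :&: S j|)^-1 - 1) <= (2 ^ k)%:R * eta * N.
Proof.
move=> gi.
apply: (@le_trans _ _ (\sum_j w j * \sum_(A : {set V} | (A != finset.set0) && (A \subset S i :&: S j)) (p ^+ #|A|)^-1)).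
  by apply: ler_sum => j _; apply: ler_wpM2l => //; exact: pinv_sub.
under eq_bigr => j _ do rewrite mulr_sumr.
rewrite (exchange_big_dep (fun A : {set V} => (A != finset.set0) && (A \subset S i))) /=; last first.
  by move=> j A _ /andP[-> ]; rewrite finset.subsetI => /andP[->].
apply: (@le_trans _ _ (\sum_(A : {set V} | (A != finset.set0) && (A \subset S i)) eta * N)).
  apply: ler_sum => A /andP[nA sA].
  have e : \sum_(j | (A != finset.set0) && (A \subset S i :&: S j)) w j * (p ^+ #|A|)^-1
           = t A * (p ^+ #|A|)^-1.
    rewrite /tA mulr_suml; apply: eq_bigl => j; by rewrite nA finset.subsetI sA.
  rewrite e; move/forallP: gi => /(_ A); rewrite nA sA /= => h.
  rewrite ler_pdivrMr ?pX_gt0 //; by rewrite mulrAC.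
apply: (@le_trans _ _ (\sum_(A : {set V} | A \subset S i) eta * N)).
  apply: sum_le_subpred => [A /andP[]//|A _].
  by apply: mulr_ge0 => //; exact: ltW.
rewrite (eq_bigl (fun A => A \in powerset (S i))); last by move=> A; rewrite powersetE.
rewrite sumr_const card_powerset -(mulr_natl (eta * N)) -mulrA; apply: ler_wpM2r.
  by apply: mulr_ge0 => //; exact: ltW.
by rewrite ler_nat leq_exp2l.
Qed.


Definition Zg (X : smp) : R :=
  N^-1 * \sum_(i | good i) w i * (p ^+ #|S i|)^-1 * (subs (S i) X)%:R.
Definition Zb (X : smp) : R :=
  N^-1 * \sum_(i | ~~ good i) w i * (p ^+ #|S i|)^-1 * (subs (S i) X)%:R.
Definition ag : R := N^-1 * \sum_(i | good i) w i.
Definition bg : R := N^-1 * \sum_(i | ~~ good i) w i.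

Lemma Z_split X : Z X = Zg X + Zb X.
Proof. by rewrite /Zf (bigID good) mulrDr. Qed.

Lemma ab1 : ag + bg = 1.
Proof.
rewrite /ag /bg -mulrDr.
have -> : \sum_(i | good i) w i + \sum_(i | ~~ good i) w i = N by rewrite [N](bigID good).
by rewrite mulVf // gt_eqF.
Qed.

Lemma EZg : Ex p Zg = ag.
Proof. exact: Ex_Zpart. Qed.

Lemma EZb : Ex p Zb = bg.
Proof. exact: Ex_Zpart. Qed.

Lemma Zb_ge0 X : 0 <= Zb X.
Proof.
apply: mulr_ge0; first exact: Ninv_ge0.
apply: sumr_ge0 => i _; apply: mulr_ge0; last exact: ler0n.
by apply: mulr_ge0 => //; rewrite invr_ge0 ltW // pX_gt0.
Qed.

Lemma bg_ge0 : 0 <= bg.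
Proof. by apply: mulr_ge0; [exact: Ninv_ge0 | exact: sumr_ge0]. Qed.

Lemma EZg2 : Ex p (fun X => Zg X ^+ 2) =
  N^-1 * N^-1 * \sum_(i | good i) \sum_(j | good j) w i * w j * (p ^+ #|S i :&: S j|)^-1.
Proof.
transitivity (Ex p (fun X => N^-1 * N^-1 * \sum_(i | good i) \sum_(j | good j)
   (w i * (p ^+ #|S i|)^-1 * (w j * (p ^+ #|S j|)^-1)) * (subs (S i :|: S j) X)%:R)).
  apply: Ex_ext => X; rewrite expr2 /Zg mulrACA; congr (_ * _).
  rewrite mulr_suml; apply: eq_bigr => i _; rewrite mulr_sumr; apply: eq_bigr => j _.
  rewrite -ind_mul; ring.
rewrite Ex_scale Ex_sum; congr (_ * _); apply: eq_bigr => i _.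
rewrite Ex_sum; apply: eq_bigr => j _; rewrite Ex_scale Ex_ind.
have hu : p ^+ #|S i :|: S j| = p ^+ #|S i| * p ^+ #|S j| / p ^+ #|S i :&: S j|.
  by rewrite -exprD -cardsUI exprD mulfK // pX_neq0.
rewrite hu; have h1 := pX_neq0 p01 #|S i|; have h2 := pX_neq0 p01 #|S j|.
have h3 := pX_neq0 p01 #|S i :&: S j|.
field.
by rewrite h1 h2 h3.
Qed.

Lemma var_bound : Ex p (fun X => (Zg X - ag) ^+ 2) <= (2 ^ k)%:R * eta.
Proof.
set q := fun i j => (p ^+ #|S i :&: S j|)^-1.
have E : Ex p (fun X => (Zg X - ag) ^+ 2) =
   N^-1 * N^-1 * \sum_(i | good i) w i * \sum_(j | good j) w j * (q i j - 1).
  transitivity (Ex p (fun X => Zg X ^+ 2 + (-(2 * ag) * Zg X + ag ^+ 2))).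
    by apply: Ex_ext => X; ring.
  rewrite Ex_add Ex_add Ex_scale Ex_const EZg EZg2.
  have a2 : ag ^+ 2 = N^-1 * N^-1 * \sum_(i | good i) w i * \sum_(j | good j) w j.
    by rewrite expr2 /ag mulrACA mulr_suml.
  have e2 : forall i, w i * \sum_(j | good j) w j * (q i j - 1) =
      \sum_(j | good j) w i * w j * q i j - w i * \sum_(j | good j) w j.
    move=> i; rewrite mulr_sumr [X in _ = _ - X]mulr_sumr -sumrB.
    by apply: eq_bigr => j _; rewrite /q; ring.
  rewrite (eq_bigr _ (fun i _ => e2 i)) sumrB mulrBr -a2 /q; ring.
rewrite E.
set C := (2 ^ k)%:R * eta * N.
have hC : 0 <= C by apply: mulr_ge0; [apply: mulr_ge0 => //; exact: ler0n | exact: ltW].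
have hN := Ninv_ge0 N_gt0.
apply: (@le_trans _ _ (N^-1 * N^-1 * \sum_(i | good i) w i * C)).
  apply: ler_wpM2l; first exact: mulr_ge0.
  apply: ler_sum => i gi; apply: ler_wpM2l => //.
  apply: le_trans (key_good gi).
  apply: (@sum_le_subpred _ _ good (fun _ => true)) => // j _.
  by apply: mulr_ge0 => //; rewrite subr_ge0 pinv_ge1.
rewrite -mulr_suml.
apply: (@le_trans _ _ (N^-1 * N^-1 * (N * C))).
  apply: ler_wpM2l; first exact: mulr_ge0.
  apply: ler_wpM2r => //.
  by apply: (@sum_le_subpred _ _ good (fun _ => true)).
rewrite /C; apply: eq_ler; field; by rewrite gt_eqF.
Qed.

Definition badA (A : {set V}) : bool :=
  (1 <= #|A| <= k)%N && (eta * p ^+ #|A| * N < t A).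

Lemma Bad_eq : Bad w S p k eta = \sum_(A | badA A) t A.
Proof.
rewrite /Bad /badA [RHS]big_mkcondr /=; apply: eq_bigr => A _.
by case: ifP => _; rewrite ?mulr1 ?mulr0.
Qed.

Lemma Bad_ge0 : 0 <= Bad w S p k eta.
Proof. by rewrite Bad_eq; apply: sumr_ge0 => A _; exact: tA_ge0. Qed.

Lemma bg_bound : bg <= N^-1 * Bad w S p k eta.
Proof.
apply: ler_wpM2l; first exact: Ninv_ge0.
rewrite Bad_eq /tA (exchange_big_dep (fun _ => true)) //=.
rewrite [X in X <= _]big_mkcond /=; apply: ler_sum => i _.
case: ifP => gi; last first.
  by apply: sumr_ge0 => A _.
move/forallPn: gi => [A]; rewrite negb_imply -ltNge => /andP[/andP[nA sA] hA].
rewrite (bigD1 A) /=; last first.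
  rewrite sA andbT /badA hA andbT card_gt0 nA /=.
  exact: leq_trans (subset_leq_card sA) (Sk i).
by rewrite lerDl; apply: sumr_ge0.
Qed.

Lemma pt_ineq (d u y b : R) : 0 < d -> 0 <= y -> 0 <= b -> 0 <= u ->
  d < u + y + b -> 1 <= 9 / d ^+ 2 * u ^+ 2 + (3 / d * y + 3 / d * b).
Proof.
move=> d0 y0 b0 u0 h.
have h2 : 0 <= d * (u + y + b - d) by apply: mulr_ge0; [exact: ltW | rewrite subr_ge0; exact: ltW].
have h3 : 0 <= (3 * u - d / 2) ^+ 2 by exact: sqr_ge0.
have h1 : d ^+ 2 <= 9 * u ^+ 2 + 3 * d * (y + b) by nra.
have -> : 9 / d ^+ 2 * u ^+ 2 + (3 / d * y + 3 / d * b) =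
          (9 * u ^+ 2 + 3 * d * (y + b)) / d ^+ 2.
  by field; rewrite gt_eqF.
by rewrite ler_pdivlMr ?exprn_gt0 // mul1r.
Qed.

Lemma suff_bound delta : 0 < delta ->
  Prb p (fun X => delta < `|Z X - 1|) <=
  9 / delta ^+ 2 * ((2 ^ k)%:R * eta) + 6 / delta * (N^-1 * Bad w S p k eta).
Proof.
move=> d0; rewrite Prb_Ex.
apply: (@le_trans _ _ (Ex p (fun X => 9 / delta ^+ 2 * (Zg X - ag) ^+ 2 +
     (3 / delta * Zb X + 3 / delta * bg)))).
  apply: Ex_le; first exact: pp01.
  move=> X; have [h|h] := boolP (delta < `|Z X - 1|); last first.
    have hd : 0 <= 9 / delta ^+ 2 by apply: divr_ge0 => //; exact: exprn_ge0 (ltW d0).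
    have hd' : 0 <= 3 / delta by apply: divr_ge0 => //; exact: ltW.
    rewrite /=; apply: addr_ge0; first by apply: mulr_ge0 => //; exact: sqr_ge0.
    apply: addr_ge0; apply: mulr_ge0 => //; [exact: Zb_ge0 | exact: bg_ge0].
  rewrite /= -(real_normK (num_real (Zg X - ag))).
  apply: pt_ineq; [exact: d0 | exact: Zb_ge0 | exact: bg_ge0 | exact: normr_ge0 |].
  apply: (lt_le_trans h).
  have -> : Z X - 1 = (Zg X - ag) + Zb X - bg by rewrite Z_split -ab1; ring.
  apply: (le_trans (ler_normB _ _)); rewrite (ger0_norm bg_ge0) lerD2r.
  by apply: (le_trans (ler_normD _ _)); rewrite (ger0_norm (Zb_ge0 X)).
rewrite Ex_add Ex_add Ex_scale Ex_scale EZb Ex_const.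
have hb := bg_bound.
have hv := var_bound.
have hd : 0 <= 9 / delta ^+ 2 by apply: divr_ge0 => //; exact: exprn_ge0 (ltW d0).
have hd' : 0 <= 3 / delta by apply: divr_ge0 => //; exact: ltW.
have : 9 / delta ^+ 2 * Ex p (fun X => (Zg X - ag) ^+ 2) <= 9 / delta ^+ 2 * ((2 ^ k)%:R * eta).
  exact: ler_wpM2l.
have : 3 / delta * bg <= 3 / delta * (N^-1 * Bad w S p k eta) by exact: ler_wpM2l.
have -> : 6 / delta * (N^-1 * Bad w S p k eta) = 3 / delta * (N^-1 * Bad w S p k eta) + 3 / delta * (N^-1 * Bad w S p k eta).
  by ring.
lra.
Qed.
End Good.
End Suff.

Local Open Scope ring_scope.

Lemma select (R : realType) (T : finType) (f : T -> R) (c : R) : 0 < c ->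
  forall F : {set T}, c <= \sum_(x in F) f x ->
  exists (Aa : {set T}) (B : T),
    [/\ Aa \subset F, B \in Aa, c <= \sum_(x in Aa) f x & \sum_(x in Aa :\ B) f x < c].
Proof.
move=> c0 F; move Hn: #|F| => n; elim: n F Hn => [|n IH] F Hn hF.
  move/eqP: Hn; rewrite cards_eq0 => /eqP eF; move: hF; rewrite eF finset.big_set0.
  by move=> h; have := lt_le_trans c0 h; rewrite ltxx.
have [/existsP [B /andP [BF hB]]|hno] := boolP [exists B in F, c <= \sum_(x in F :\ B) f x].
  have hn : #|F :\ B| = n by move: Hn; rewrite (cardsD1 B) BF add1n => -[].
  case: (IH _ hn hB) => Aa [B1 [hsub BA h1 h2]].
  exists Aa, B1; split => //; exact: (fintype.subset_trans hsub (finset.subsetDl F [set B])).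
have [B BF] : exists B, B \in F by apply/set0Pn; rewrite -card_gt0 Hn.
exists F, B; split => //.
rewrite ltNge; apply/negP => h; move/negP: hno; apply; apply/existsP; exists B.
by rewrite BF h.
Qed.

Section Nec.
Variable R : realType.
Variable m : nat.
Local Notation V := 'I_m.
Local Notation smp := {ffun V -> bool}.
Variable I : finType.
Variable w : I -> R.
Variable S : I -> {set V}.
Variable p : R.
Variable k : nat.
Hypothesis w_ge0 : forall i, 0 <= w i.
Hypothesis p01 : 0 < p < 1.
Hypothesis Sk : forall i, (#|S i| <= k)%N.
Local Notation N := (Ntot w).
Local Notation t := (tA w S).
Local Notation Z := (Zf w S p).
Hypothesis N_gt0 : 0 < N.

Lemma tail_bound (Ev : pred smp) delta : 0 < delta ->
  Ex p (fun X => (Z X - 1) * (Ev X)%:R) <= delta + Prb p (fun X => delta < `|Z X - 1|).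
Proof.
move=> d0.
have E0 : Ex p (fun X => Z X - 1) = 0.
  by rewrite Ex_add (EZ S p01 N_gt0) Ex_const subrr.
have -> : Ex p (fun X => (Z X - 1) * (Ev X)%:R) =
          Ex p (fun X => (1 - Z X) * (1 - (Ev X)%:R)).
  transitivity (Ex p (fun X => (Z X - 1) + (1 - Z X) * (1 - (Ev X)%:R))).
    by apply: Ex_ext => X; ring.
  by rewrite Ex_add E0 add0r.
rewrite Prb_Ex -[X in _ <= X + _](Ex_const m p delta) -Ex_add.
apply: Ex_le; first exact: pp01.
move=> X; have hZ := Z_ge0 S w_ge0 p01 N_gt0 X.
case: (Ev X) => /=; first by rewrite subrr mulr0; apply: addr_ge0; [exact: ltW|exact: ler0n].
rewrite subr0 mulr1.
have [h|h] := boolP (delta < `|Z X - 1|) => /=.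
  by have := ltW d0; lra.
rewrite -leNgt in h; rewrite addr0; apply: le_trans h; rewrite distrC; exact: ler_norm.
Qed.


Lemma two_pow_gt0 : 0 < (2 ^ k)%:R :> R.
Proof. by rewrite ltr0n expn_gt0. Qed.

Lemma sum_sub_pow (i : I) (P : pred {set V}) (c : R) : 0 <= c ->
  (forall A, P A -> A \subset S i) ->
  \sum_(A | P A) c <= (2 ^ k)%:R * c.
Proof.
move=> c0 hP.
apply: (@le_trans _ _ (\sum_(A : {set V} | A \subset S i) c)).
  exact: sum_le_subpred.
rewrite (eq_bigl (fun A => A \in powerset (S i))); last by move=> A; rewrite powersetE.
rewrite sumr_const card_powerset -(mulr_natl c); apply: ler_wpM2r => //.
by rewrite ler_nat leq_exp2l.
Qed.

Lemma nec_bound eps pb theta delta : 0 < eps -> p <= pb -> pb < 1 -> 0 < theta ->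
  theta <= N^-1 * Bad w S p k eps -> 0 < delta ->
  Num.min theta (eps * (1 - pb) / 2) / (2 ^ k)%:R * ((1 - pb) / 2)
    <= delta + Prb p (fun X => delta < `|Z X - 1|).
Proof.
move=> e0 ppb pb1 th0 hth d0.
have p0' := p0 p01.
set eta := Num.min theta (eps * (1 - pb) / 2).
have eta0 : 0 < eta.
  by rewrite lt_min th0 /=; apply: divr_gt0 => //; apply: mulr_gt0 => //; rewrite subr_gt0.
have etaT : eta <= theta by rewrite ge_min lexx.
have etaE : eta <= eps * (1 - pb) / 2 by rewrite ge_min lexx orbT.
set F := [set A | badA w S p k eps A].
have hF : eta * N <= \sum_(A in F) t A.
  have -> : \sum_(A in F) t A = Bad w S p k eps.
    by rewrite Bad_eq; apply: eq_bigl => A; rewrite inE.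
  apply: (@le_trans _ _ (theta * N)); first by apply: ler_wpM2r => //; exact: ltW.
  by move: hth; rewrite mulrC ler_pdivlMr.
have etaN0 : 0 < eta * N by exact: mulr_gt0.
have [Aa [B [sAF BA h1 h2]]] := select etaN0 hF.
have badAa : forall A, A \in Aa -> badA w S p k eps A.
  by move=> A /(fintype.subsetP sAF); rewrite inE.
pose Ev := fun X : smp => [exists A in Aa, subs A X].
have mEv : monoP Ev.
  move=> X Y XY /existsP [A /andP [AA sA]]; apply/existsP; exists A; rewrite AA /=.
  apply/forallP => v; apply/implyP => vA; apply: XY.
  by move/forallP: sA => /(_ v) /implyP; apply.
have PEv : Prb p Ev <= \sum_(A in Aa) p ^+ #|A|.
  have -> : \sum_(A in Aa) p ^+ #|A| = Ex p (fun X => \sum_(A in Aa) (subs A X)%:R).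
    by rewrite Ex_sum; apply: eq_bigr => A _; rewrite Ex_ind.
  rewrite Prb_Ex; apply: Ex_le; first exact: pp01.
  move=> X; case: (boolP (Ev X)) => [/existsP [A /andP [AA sA]] | _] /=.
    by rewrite (bigD1 A) //= sA lerDl; apply: sumr_ge0 => A' _; exact: ler0n.
  by apply: sumr_ge0 => A' _; exact: ler0n.
have Pb : \sum_(A in Aa) p ^+ #|A| <= pb + (1 - pb) / 2.
  rewrite (bigD1 B) //=; apply: lerD.
    have := badAa B BA; rewrite /badA => /andP [/andP [c1 _] _].
    move: c1; case: #|B| => [//|n] _; rewrite exprS.
    apply: le_trans ppb; rewrite -[X in _ <= X]mulr1; apply: ler_wpM2l; first exact: ltW.
    by apply: exprn_ile1; [exact: ltW | exact: ltW (p1 p01)].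
  have eN : 0 < eps * N by exact: mulr_gt0.
  apply: (@le_trans _ _ (\sum_(A in Aa | A != B) t A / (eps * N))).
    apply: ler_sum => A /andP [AA _]; rewrite ler_pdivlMr //.
    have := badAa A AA; rewrite /badA => /andP [_ /ltW h].
    by apply: le_trans h; apply: eq_ler; ring.
  rewrite -mulr_suml.
  have -> : \sum_(A in Aa | A != B) t A = \sum_(x in Aa :\ B) t x.
    by apply: eq_bigl => A; rewrite finset.in_setD1 andbC.
  apply: (@le_trans _ _ (eta * N / (eps * N))).
    by apply: ler_wpM2r; [rewrite invr_ge0; exact: ltW | exact: ltW].
  have -> : eta * N / (eps * N) = eta / eps by field; rewrite !gt_eqF.
  by rewrite ler_pdivrMr // mulrC mulrA.
pose C := fun i => [exists A in Aa, A \subset S i].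
have hmu : eta * N <= (2 ^ k)%:R * \sum_(i | C i) w i.
  apply: le_trans h1 _.
  rewrite /tA (exchange_big_dep (fun _ => true)) //=.
  rewrite mulr_sumr [X in _ <= X]big_mkcond /=; apply: ler_sum => i _.
  case: ifP => Ci.
    by apply: (sum_sub_pow (i := i)) => // A /andP [].
  rewrite big1 // => A /andP [AA As]; move/negbT: Ci => /existsPn /(_ A).
  by rewrite AA As.
set mu := N^-1 * \sum_(i | C i) w i.
have hmu' : eta / (2 ^ k)%:R <= mu.
  have K0 := two_pow_gt0.
  have eS : \sum_(i | C i) w i = mu * N by rewrite /mu mulrAC mulVf ?mul1r // gt_eqF.
  rewrite eS in hmu.
  rewrite ler_pdivrMr //.
  have : eta * N <= (mu * (2 ^ k)%:R) * N by move: hmu; rewrite mulrCA mulrA.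
  by rewrite ler_pM2r.
have key : Prb p Ev + mu * (1 - Prb p Ev) <= Ex p (fun X => Z X * (Ev X)%:R).
  have -> : Ex p (fun X => Z X * (Ev X)%:R) =
      N^-1 * \sum_i w i * (p ^+ #|S i|)^-1 * Prb p (fun X => subs (S i) X && Ev X).
    transitivity (Ex p (fun X => N^-1 * \sum_i w i * (p ^+ #|S i|)^-1 *
        ((subs (S i) X)%:R * (Ev X)%:R))).
      apply: Ex_ext => X; rewrite /Zf -mulrA mulr_suml; congr (_ * _).
      by apply: eq_bigr => i _; rewrite mulrA.
    rewrite Ex_scale Ex_sum; congr (_ * _); apply: eq_bigr => i _.
    rewrite Ex_scale Prb_Ex; congr (_ * _); apply: Ex_ext => X.
    by rewrite -natrM mulnb.
  set PE := Prb p Ev.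
  have hterm : forall i, w i * (if C i then 1 else PE) <=
      w i * (p ^+ #|S i|)^-1 * Prb p (fun X => subs (S i) X && Ev X).
    move=> i; rewrite -mulrA; apply: ler_wpM2l => //.
    rewrite ler_pdivlMl ?pX_gt0 //.
    case: ifP => Ci.
      move/existsP: Ci => [A /andP [AA AS]].
      rewrite mulr1 Prb_Ex -Ex_ind; apply: eq_ler; apply: Ex_ext => X.
      case hs: (subs (S i) X) => //=.
      have -> // : Ev X.
      apply/existsP; exists A; rewrite AA /=; apply/forallP => v; apply/implyP => vA.
      by move/forallP: hs => /(_ v) /implyP; apply; apply: (fintype.subsetP AS).
    have := harris p01 (S i) mEv.
    by move/le_trans; apply; apply: eq_ler; apply: eq_bigl => X; rewrite andbC.
  apply: (@le_trans _ _ (N^-1 * \sum_i w i * (if C i then 1 else PE))); last first.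
    apply: ler_wpM2l; first exact: Ninv_ge0.
    by apply: ler_sum => i _; exact: hterm.
  have -> : \sum_i w i * (if C i then 1 else PE) = PE * N + (1 - PE) * \sum_(i | C i) w i.
    rewrite [X in _ = _ + _ * X]big_mkcond /= mulr_sumr /Ntot mulr_sumr -big_split /=.
    by apply: eq_bigr => i _; case: (C i); ring.
  apply: eq_ler; rewrite /mu; field; by rewrite gt_eqF.
have hfin : Ex p (fun X => (Z X - 1) * (Ev X)%:R) = Ex p (fun X => Z X * (Ev X)%:R) - Prb p Ev.
  transitivity (Ex p (fun X => Z X * (Ev X)%:R + - (Ev X)%:R)).
    by apply: Ex_ext => X; ring.
  by rewrite Ex_add Ex_opp Prb_Ex.
have ht := tail_bound Ev d0.
rewrite hfin in ht.
have h1PE : (1 - pb) / 2 <= 1 - Prb p Ev.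
  have := le_trans PEv Pb; lra.
have eta2 : 0 <= eta / (2 ^ k)%:R by apply: divr_ge0; [exact: ltW | exact: ltW two_pow_gt0].
have pb2 : 0 <= (1 - pb) / 2 by apply: divr_ge0 => //; rewrite subr_ge0 ltW.
have := ler_pM eta2 pb2 hmu' h1PE.
move=> hh; apply: le_trans hh _.
lra.
Qed.
End Nec.

Unset Implicit Arguments. Set Strict Implicit. Set Printing Implicit Defensive.

Local Open Scope classical_set_scope.
Local Open Scope ring_scope.

Lemma limsup_lt1 (R : realType) (p : nat -> R) :
  (limn_esup (fun n => (p n)%:E) < 1%:E)%E ->
  exists pb : R, pb < 1 /\ (\forall n \near \oo, p n <= pb).
Proof.
move=> h.
have [n0 hn0] : exists n0, (esups (fun n => (p n)%:E) n0 < 1%:E)%E.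
  apply/not_existsP => hno.
  have : (1%:E <= limn (esups (fun n => (p n)%:E)))%E.
    apply: lime_ge; first exact: is_cvg_esups.
    near=> n; have := hno n; by rewrite leNgt => /negP.
  by rewrite -limn_esup_lim leNgt h.
have ub : forall k, (n0 <= k)%N -> ((p k)%:E <= esups (fun n => (p n)%:E) n0)%E.
  by move=> k hk; apply: ereal_sup_ubound; exists k.
move: hn0 ub; case: (esups _ n0) => [r| |] //= hr ub.
- exists r; split; first by rewrite -lte_fin.
  near=> n; rewrite -lee_fin; apply: ub; near: n; exists n0 => //.
- exfalso; have := ub n0 (leqnn _); by rewrite leeNy_eq.
Unshelve. all: by end_near.
Qed.

Local Open Scope classical_set_scope.
Local Open Scope ring_scope.

Section Concrete.
Variable R : realType.
Variables (k mm : nat) (EH : rel 'I_k) (GG : rel 'I_mm).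
Definition wC (s : {ffun 'I_k -> 'I_mm}) : R :=
  (nAut EH)%:R^-1 * ((injectiveb s)%:R * MH R EH GG s).
Definition SC (s : {ffun 'I_k -> 'I_mm}) : {set 'I_mm} := [set s i | i : 'I_k].

Lemma wC_ge0 s : 0 <= wC s.
Proof.
apply: mulr_ge0; first by rewrite invr_ge0 ler0n.
apply: mulr_ge0; first exact: ler0n.
by apply: prodr_ge0 => i _; apply: prodr_ge0 => j _; rewrite /adj ler0n.
Qed.

Lemma SC_k s : (#|SC s| <= k)%N.
Proof. by rewrite /SC (leq_trans (leq_imset_card _ _)) // card_ord. Qed.

Lemma NHG_eq : NHG R EH GG = Ntot wC.
Proof.
rewrite /NHG /Ntot /wC -mulr_sumr big_mkcond /=; congr (_ * _).
by apply: eq_bigr => s _; case: (injectiveb s); rewrite ?mul1r ?mul0r.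
Qed.

Lemma tH_eq A : tH R EH GG A = tA wC SC A.
Proof.
rewrite /tH /tA /wC -mulr_sumr big_mkcond /= [in RHS]big_mkcond /=; congr (_ * _).
by apply: eq_bigr => s _; rewrite /SC; case: (injectiveb s); rewrite /= ?mul1r ?mul0r //; case: ifP.
Qed.

Lemma prod_bool_nat (T : finType) (b : T -> bool) :
  \prod_(u : T) ((b u)%:R : R) = ([forall u, b u])%:R.
Proof.
case: forallP => [H|H].
  by rewrite big1 // => u _; rewrite H.
have [u hu] : exists u, ~~ b u.
  by apply/existsP; rewrite -negb_forall; apply/negP => /forallP.
by rewrite (bigD1 u) //= (negbTE hu) mul0r.
Qed.

Lemma hatN_eq p X : 0 < p < 1 -> 0 < NHG R EH GG ->
  hatN EH GG p X / NHG R EH GG = Zf wC SC p X.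
Proof.
move=> p01 N0.
rewrite /hatN /THG /Zf -NHG_eq mulrC; congr (_ * _).
rewrite mulrA mulr_sumr big_mkcond /=.
apply: eq_bigr => s _; rewrite /wC; case: ifP => hs; last by rewrite /= mul0r mulr0 !mul0r.
have cS : #|SC s| = k by rewrite /SC card_imset ?card_ord //; exact/injectiveP.
rewrite cS prod_bool_nat /= mul1r.
have -> : [forall u, X (s u)] = subs (SC s) X.
  apply/forallP/forallP => [H v|H u].
    by apply/implyP => /imsetP [u _ ->].
  by move/implyP: (H (s u)); apply; apply/imsetP; exists u.
by ring.
Qed.

End Concrete.

Local Open Scope classical_set_scope.
Local Open Scope ring_scope.

Lemma Prb_ge0 (R : realType) (m : nat) (p : R) (Q : pred {ffun 'I_m -> bool}) :
  0 < p < 1 -> 0 <= Prb p Q.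
Proof. move=> p01; apply: sumr_ge0 => X _; apply: mu_ge0; exact: pp01. Qed.

Lemma nec_dir (R : realType) (k : nat) (m : nat -> nat) (I : nat -> finType)
  (w : forall n, I n -> R) (S : forall n, I n -> {set 'I_(m n)}) (p : nat -> R)
  (g : R -> nat -> R) :
  (forall n i, 0 <= w n i) -> (forall n i, (#|S n i| <= k)%N) ->
  (forall n, 0 < Ntot (w n)) -> (forall n, 0 < p n < 1) ->
  forall pb, pb < 1 -> (\forall n \near \oo, p n <= pb) ->
  (forall delta n, g delta n = Prb (p n) (fun X => delta < `|Zf (w n) (S n) (p n) X - 1|)) ->
  (forall delta, 0 < delta -> g delta @ \oo --> 0) ->
  forall eps, 0 < eps -> forall f : nat -> R,
  (forall n, f n = (Ntot (w n))^-1 * Bad (w n) (S n) (p n) k eps) -> f @ \oo --> 0.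
Proof.
move=> w0 Sk N0 p01 pb pb1 hpb hg H eps e0 f hf.
apply/cvgrPdist_lt => e e_gt0.
set c := Num.min e (eps * (1 - pb) / 2) / (2 ^ k)%:R * ((1 - pb) / 2).
have c0 : 0 < c.
  apply: mulr_gt0; last by apply: divr_gt0 => //; rewrite subr_gt0.
  apply: divr_gt0; last by rewrite ltr0n expn_gt0.
  rewrite lt_min e_gt0 /=; apply: divr_gt0 => //; apply: mulr_gt0 => //.
  by rewrite subr_gt0.
have c2 : 0 < c / 2 by apply: divr_gt0.
have := H (c / 2) c2; move/cvgrPdist_lt => /(_ (c / 2) c2) hP.
near=> n.
have hpn : p n <= pb by near: n.
have hPn : `|0 - g (c / 2) n| < c / 2 by near: n.
rewrite hg sub0r normrN in hPn.
rewrite ger0_norm in hPn; last exact: Prb_ge0.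
have Bg : 0 <= (Ntot (w n))^-1 * Bad (w n) (S n) (p n) k eps.
  apply: mulr_ge0; first by rewrite invr_ge0 ltW.
  by apply: Bad_ge0.
rewrite hf sub0r normrN ger0_norm //.
rewrite ltNge; apply/negP => hge.
have := nec_bound (w0 n) (p01 n) (Sk n) (N0 n) e0 hpn pb1 e_gt0 hge c2.
rewrite -/c; lra.
Unshelve. all: by end_near.
Qed.

Lemma suff_dir (R : realType) (k : nat) (m : nat -> nat) (I : nat -> finType)
  (w : forall n, I n -> R) (S : forall n, I n -> {set 'I_(m n)}) (p : nat -> R)
  (g : R -> nat -> R) :
  (forall n i, 0 <= w n i) -> (forall n i, (#|S n i| <= k)%N) ->
  (forall n, 0 < Ntot (w n)) -> (forall n, 0 < p n < 1) ->
  (forall eps n, g eps n = (Ntot (w n))^-1 * Bad (w n) (S n) (p n) k eps) ->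
  (forall eps, 0 < eps -> g eps @ \oo --> 0) ->
  forall delta, 0 < delta -> forall f : nat -> R,
  (forall n, f n = Prb (p n) (fun X => delta < `|Zf (w n) (S n) (p n) X - 1|)) ->
  f @ \oo --> 0.
Proof.
move=> w0 Sk N0 p01 hg H delta d0 f hf.
apply/cvgrPdist_lt => e e_gt0.
have K0 : 0 < (2 ^ k)%:R :> R by rewrite ltr0n expn_gt0.
set eta := e * delta ^+ 2 / (18 * (2 ^ k)%:R).
have eta0 : 0 < eta.
  by apply: divr_gt0; [apply: mulr_gt0 => //; exact: exprn_gt0 | apply: mulr_gt0].
have ed0 : 0 < e * delta / 12 by apply: divr_gt0 => //; exact: mulr_gt0.
have := H eta eta0; move/cvgrPdist_lt => /(_ _ ed0) hB.
near=> n.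
have hBn : `|0 - g eta n| < e * delta / 12 by near: n.
rewrite hg sub0r normrN in hBn.
have hu := le_lt_trans (ler_norm _) hBn.
rewrite hf sub0r normrN ger0_norm; last exact: Prb_ge0.
have hs := suff_bound (w0 n) (p01 n) (Sk n) (N0 n) (ltW eta0) d0.
have h1 : 9 / delta ^+ 2 * ((2 ^ k)%:R * eta) = e / 2.
  by rewrite /eta; field; rewrite ?gt_eqF.
have hd : 0 <= 6 / delta by apply: divr_ge0 => //; exact: ltW.
have h2 : 6 / delta * ((Ntot (w n))^-1 * Bad (w n) (S n) (p n) k eta) < 6 / delta * (e * delta / 12).
  by rewrite ltr_pM2l // divr_gt0.
have h3 : 6 / delta * (e * delta / 12) = e / 2 by field; rewrite gt_eqF.
lra.
Unshelve. all: by end_near.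
Qed.

Theorem theorem2p2 (R : realType) (k : nat) (EH : rel 'I_k)
  (m : nat -> nat) (G : forall n : nat, rel 'I_(m n)) (p : nat -> R) :
  (0 < k)%N ->
  simple_graph EH -> connected_graph EH ->
  (forall n, simple_graph (G n)) ->
  ((fun n => (m n)%:R : R) @ \oo --> +oo) ->
  (forall n, 0 < NHG R EH (G n)) ->
  (forall n, 0 < p n < 1) ->
  (limn_esup (fun n => (p n)%:E) < 1%:E)%E ->
  ((forall eps : R, 0 < eps ->
      (fun n => Pr_sample (p n)
         (fun X => eps < `| hatN EH (G n) (p n) X / NHG R EH (G n) - 1 |)) @ \oo --> 0)
   <->
   (forall eps : R, 0 < eps ->
      (fun n => (NHG R EH (G n))^-1 *
         \sum_(A : {set 'I_(m n)} | (1 <= #|A| <= k)%N)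
            tH R EH (G n) A *
            ((eps * p n ^+ #|A| * NHG R EH (G n) < tH R EH (G n) A)%R)%:R) @ \oo --> 0)).
Proof.
move=> _ _ _ _ _ hN p01 hlim.
have [pb [pb1 hpb]] := limsup_lt1 _ _ hlim.
pose w := fun n => wC R k (m n) EH (G n).
pose S := fun n => SC k (m n).
have w0 : forall n i, 0 <= w n i by move=> n i; exact: wC_ge0.
have Sk : forall n i, (#|S n i| <= k)%N by move=> n i; exact: SC_k.
have N0 : forall n, 0 < Ntot (w n) by move=> n; rewrite /w -NHG_eq.
split.
- move=> H eps e0.
  apply: (nec_dir _ _ _ _ _ _ _ _ w0 Sk N0 p01 pb pb1 hpb _ H eps e0).
    move=> delta n; rewrite /Pr_sample /Prb /mu; apply: eq_bigl => X.
    by rewrite hatN_eq.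
  move=> n; rewrite NHG_eq /Bad; congr (_ * _); apply: eq_bigr => A _.
  by rewrite tH_eq.
- move=> H delta d0.
  apply: (suff_dir _ _ _ _ _ _ _ _ w0 Sk N0 p01 _ H delta d0).
    move=> eps n; rewrite NHG_eq /Bad; congr (_ * _); apply: eq_bigr => A _.
    by rewrite tH_eq.
  move=> n; rewrite /Pr_sample /Prb /mu; apply: eq_bigl => X.
  by rewrite hatN_eq.
Qed.
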